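(* Let $X$ be a compact metric space and $f\colon X\to X$ continuous. If $(X,f)$ has the shadowing property, then it has $\gamma$-restricted two-sided cofinal orbital shadowing.
   Context: Shadowing: for every $\epsilon>0$ there is $\delta>0$ such that for every sequence $\langle x_i\rangle_{i\ge0}$ with $d(f(x_i),x_{i+1})<\delta$ for all $i$ there is $z\in X$ with $d(f^i(z),x_i)<\epsilon$ for all $i\ge0$. $d_H$ is the Hausdorff metric. A full trajectory is $\langle z_i\rangle_{i\in\mathbb Z}$ with $f(z_i)=z_{i+1}$. For two-sided sequences, $\omega(\langle x_i\rangle)=\bigcap_{M}\overline{\{x_n:n>M\}}$, $\alpha(\langle x_i\rangle)=\bigcap_{M}\overline{\{x_n:n<-M\}}$. A two-sided $\delta$-pseudo-orbit is $\langle x_i\rangle_{i\in\mathbb Z}$ with $d(f(x_i),x_{i+1})<\delta$ for all $i$. $\gamma$-restricted two-sided cofinal orbital shadowing: for every $\epsilon>0$ there is $\delta>0$ such that for every two-sided $\delta$-pseudo-orbit $\langle x_i\rangle$ with $d_H(\alpha(\langle x_i\rangle),\omega(\langle x_i\rangle))<\epsilon$ there is a full trajectory $\langle z_i\rangle$ such that for every $K\in\mathbb N$ there is $N\ge K$ with $d_H(\overline{\{z_{N+i}\}_{i\ge0}},\overline{\{x_{N+i}\}_{i\ge0}})<\epsilon$ and $d_H(\overline{\{z_{i-N}\}_{i\le0}},\overline{\{x_{i-N}\}_{i\le0}})<\epsilon$. *)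

(* Defs.v *)
From Stdlib Require Import Reals ZArith List.
From Coquelicot Require Import Coquelicot.
Open Scope R_scope.

Section MetricDefs.
Context {X : Type} (d : X -> X -> R).

Definition is_metric : Prop :=
  (forall x y, 0 <= d x y) /\
  (forall x y, d x y = 0 <-> x = y) /\
  (forall x y, d x y = d y x) /\
  (forall x y z, d x z <= d x y + d y z).

Definition d_open (U : X -> Prop) : Prop :=
  forall x, U x -> exists e, 0 < e /\ forall y, d x y < e -> U y.

Definition d_compact : Prop :=
  forall (I : Type) (U : I -> X -> Prop),
    (forall i, d_open (U i)) ->
    (forall x, exists i, U i x) ->
    exists l : list I, forall x, exists i, In i l /\ U i x.

Definition d_continuous (f : X -> X) : Prop :=
  forall x eps, 0 < eps ->
    exists delta, 0 < delta /\ forall y, d x y < delta -> d (f x) (f y) < eps.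

Definition d_closure (A : X -> Prop) : X -> Prop :=
  fun x => forall e, 0 < e -> exists y, A y /\ d x y < e.

Definition dist_pt_set (x : X) (B : X -> Prop) : Rbar :=
  Glb_Rbar (fun r => exists b, B b /\ r = d x b).

Definition excess (A B : X -> Prop) : Rbar :=
  Lub_Rbar (fun r => exists a, A a /\ Finite r = dist_pt_set a B).

Definition Rbar_maxi (a b : Rbar) : Rbar :=
  if Rbar_le_dec a b then b else a.

Definition hausdorff (A B : X -> Prop) : Rbar :=
  Rbar_maxi (excess A B) (excess B A).

Definition shadowing (f : X -> X) : Prop :=
  forall eps, 0 < eps -> exists delta, 0 < delta /\
    forall x : nat -> X, (forall i, d (f (x i)) (x (S i)) < delta) ->
      exists z, forall i, d (Nat.iter i f z) (x i) < eps.

Definition omega_seq (x : Z -> X) : X -> Prop :=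
  fun y => forall M : Z, d_closure (fun p => exists n, (n > M)%Z /\ p = x n) y.

Definition alpha_seq (x : Z -> X) : X -> Prop :=
  fun y => forall M : Z, d_closure (fun p => exists n, (n < - M)%Z /\ p = x n) y.

Definition fwd_tail (x : Z -> X) (N : Z) : X -> Prop :=
  d_closure (fun p => exists i, (i >= 0)%Z /\ p = x (N + i)%Z).

Definition bwd_tail (x : Z -> X) (N : Z) : X -> Prop :=
  d_closure (fun p => exists i, (i <= 0)%Z /\ p = x (i - N)%Z).

Definition gamma_two_sided_cofinal_orbital_shadowing (f : X -> X) : Prop :=
  forall eps, 0 < eps -> exists delta, 0 < delta /\
    forall x : Z -> X,
      (forall i, d (f (x i)) (x (i + 1)%Z) < delta) ->
      Rbar_lt (hausdorff (alpha_seq x) (omega_seq x)) (Finite eps) ->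
      exists z : Z -> X, (forall i, f (z i) = z (i + 1)%Z) /\
        forall K : nat, exists N : nat, (K <= N)%nat /\
          Rbar_lt (hausdorff (fwd_tail z (Z.of_nat N)) (fwd_tail x (Z.of_nat N))) (Finite eps) /\
          Rbar_lt (hausdorff (bwd_tail z (Z.of_nat N)) (bwd_tail x (Z.of_nat N))) (Finite eps).

End MetricDefs.

(* Main.v *)
Require Import Defs.
From Stdlib Require Import Reals ZArith List.
From Coquelicot Require Import Coquelicot.
From Stdlib Require Import ClassicalEpsilon Classical Lia Lra.
Open Scope R_scope.

Lemma iter_cont (X : Type) (d : X -> X -> R) (f : X -> X)
  (Hc : d_continuous d f) : forall n x eps, 0 < eps -> exists delta, 0 < delta /\
    forall y, d x y < delta -> d (Nat.iter n f x) (Nat.iter n f y) < eps.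
Proof.
  induction n as [|n IH]; intros x eps Heps.
  - exists eps; split; auto.
  - destruct (Hc (Nat.iter n f x) eps Heps) as [d1 [Hd1 H1]].
    destruct (IH x d1 Hd1) as [d2 [Hd2 H2]].
    exists d2; split; auto. intros y Hy. simpl. apply H1, H2, Hy.
Qed.

Lemma fold_max_in (X : Type) (g : X -> nat) (l : list X) q :
  In q l -> (g q <= fold_right Nat.max 0%nat (map g l))%nat.
Proof.
  induction l as [|a l IH]; simpl; [tauto|].
  intros [->|H]; [lia|]. specialize (IH H). lia.
Qed.

Lemma cluster_exists (X : Type) (d : X -> X -> R) (Hm : is_metric d)
  (Hk : d_compact d) (u : nat -> X) :
  exists q, forall eps, 0 < eps -> forall N, exists n, (N <= n)%nat /\ d q (u n) < eps.
Proof.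
  destruct Hm as [Hnn [Hz [Hsym Htri]]].
  apply NNPP; intro H.
  assert (H1: forall q, exists p : R * nat, 0 < fst p /\
     forall n, (snd p <= n)%nat -> fst p <= d q (u n)).
  { intro q. apply NNPP; intro H2. apply H. exists q. intros eps Heps N.
    apply NNPP; intro H3. apply H2. exists (eps, N). split; [exact Heps|].
    intros n Hn. simpl. apply Rnot_lt_le. intro H4. apply H3. exists n. split; auto. }
  destruct (ClassicalEpsilon.choice _ H1) as [g Hg].
  destruct (Hk X (fun q y => d q y < fst (g q))) as [l Hl].
  - intros q y Hy. exists (fst (g q) - d q y). split; [lra|].
    intros y' Hy'. pose proof (Htri q y y'). lra.
  - intro y. exists y. rewrite (proj2 (Hz y y) eq_refl). apply (Hg y).
  - destruct (Hl (u (fold_right Nat.max 0%nat (map (fun q => snd (g q)) l)))) as [q [Hin Hq]].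
    pose proof (fold_max_in X (fun q => snd (g q)) l q Hin) as HM.
    pose proof (proj2 (Hg q) _ HM). lra.
Qed.

Definition Kset {X : Type} (d : X -> X -> R) (f : X -> X) (x : Z -> X) (e : R)
  (k : nat) (p : X) : Prop :=
  forall i : nat, d (Nat.iter i f p) (x (Z.of_nat i - Z.of_nat k)%Z) <= e.

Definition Pset {X : Type} (d : X -> X -> R) (f : X -> X) (x : Z -> X) (e : R)
  (m : nat) (p : X) : Prop :=
  Kset d f x e m p /\ forall k, (m <= k)%nat -> forall eta, 0 < eta ->
    exists w, Kset d f x e k w /\ d (Nat.iter (k - m) f w) p < eta.

Lemma Kshift (X : Type) (d : X -> X -> R) (f : X -> X) x e k j p :
  Kset d f x e (k + j) p -> Kset d f x e k (Nat.iter j f p).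
Proof.
  intros H i. rewrite <- Nat.iter_add. specialize (H (i + j)%nat).
  replace (Z.of_nat i - Z.of_nat k)%Z with (Z.of_nat (i+j) - Z.of_nat (k+j))%Z by lia.
  exact H.
Qed.

Lemma Kclosed (X : Type) (d : X -> X -> R) (f : X -> X) (Hm : is_metric d)
  (Hc : d_continuous d f) x e k (u : nat -> X) q :
  (forall n, Kset d f x e k (u n)) ->
  (forall eps, 0 < eps -> forall N, exists n, (N <= n)%nat /\ d q (u n) < eps) ->
  Kset d f x e k q.
Proof.
  destruct Hm as [Hnn [Hz [Hsym Htri]]].
  intros Hu Hq i. apply Rle_plus_epsilon. intros eta Heta.
  destruct (iter_cont X d f Hc i q eta Heta) as [del [Hdel Hc']].
  destruct (Hq del Hdel 0%nat) as [n [_ Hn]].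
  specialize (Hc' _ Hn). specialize (Hu n i).
  pose proof (Htri (Nat.iter i f q) (Nat.iter i f (u n)) (x (Z.of_nat i - Z.of_nat k)%Z)).
  lra.
Qed.

Lemma P0 (X : Type) (d : X -> X -> R) (f : X -> X) (Hm : is_metric d)
  (Hk : d_compact d) (Hc : d_continuous d f) x e :
  (forall k, exists p, Kset d f x e k p) -> exists p, Pset d f x e 0 p.
Proof.
  intros Hsh.
  destruct (ClassicalEpsilon.choice (fun k p => Kset d f x e k p) Hsh) as [w Hw].
  destruct (cluster_exists X d Hm Hk (fun n => Nat.iter n f (w n))) as [q Hq].
  pose proof Hm as [Hnn [Hz [Hsym Htri]]].
  exists q. split.
  - apply (Kclosed X d f Hm Hc x e 0 (fun n => Nat.iter n f (w n))); auto.
    intro n. apply (Kshift X d f x e 0 n). apply Hw.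
  - intros k _ eta Heta. destruct (Hq eta Heta k) as [n [Hkn Hn]].
    exists (Nat.iter (n - k) f (w n)). split.
    + apply Kshift. replace (k + (n - k))%nat with n by lia. apply Hw.
    + rewrite Nat.sub_0_r, <- Nat.iter_add. replace (k + (n - k))%nat with n by lia.
      rewrite Hsym. exact Hn.
Qed.

Lemma Pstep (X : Type) (d : X -> X -> R) (f : X -> X) (Hm : is_metric d)
  (Hk : d_compact d) (Hc : d_continuous d f) x e m p :
  Pset d f x e m p -> exists q, Pset d f x e (S m) q /\ f q = p.
Proof.
  intros [HK Hap].
  pose proof Hm as [Hnn [Hz [Hsym Htri]]].
  assert (H1: forall n, exists w, Kset d f x e (S m + n) w /\
             d (Nat.iter (S n) f w) p < / INR (S n)).
  { intro n. destruct (Hap (S m + n)%nat ltac:(lia) (/ INR (S n))) as [w [Hw1 Hw2]].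
    - apply Rinv_0_lt_compat, lt_0_INR; lia.
    - exists w; split; auto. replace (S m + n - m)%nat with (S n) in Hw2 by lia. exact Hw2. }
  destruct (ClassicalEpsilon.choice _ H1) as [w Hw].
  destruct (cluster_exists X d Hm Hk (fun n => Nat.iter n f (w n))) as [q Hq].
  exists q. split; [split|].
  - apply (Kclosed X d f Hm Hc x e (S m) (fun n => Nat.iter n f (w n))); auto.
    intro n. apply Kshift. apply Hw.
  - intros k Hkm eta Heta. destruct (Hq eta Heta (k - S m)%nat) as [n [Hjn Hn]].
    exists (Nat.iter (n - (k - S m)) f (w n)). split.
    + apply Kshift. replace (k + (n - (k - S m)))%nat with (S m + n)%nat by lia. apply Hw.
    + rewrite <- Nat.iter_add. replace (k - S m + (n - (k - S m)))%nat with n by lia.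
      rewrite Hsym. exact Hn.
  - apply Hz. apply Rle_antisym; [|apply Hnn].
    apply Rle_plus_epsilon. intros eps Heps. rewrite Rplus_0_l.
    destruct (Hc q (eps/2)) as [del [Hdel Hcq]]; [lra|].
    destruct (archimed_cor1 (eps/2)) as [N [HN HN0]]; [lra|].
    destruct (Hq del Hdel N) as [n [Hn1 Hn2]].
    specialize (Hcq _ Hn2). destruct (Hw n) as [_ Hwn].
    assert (/ INR (S n) <= / INR N).
    { apply Rinv_le_contravar. apply lt_0_INR; lia. apply le_INR; lia. }
    pose proof (Htri (f q) (f (Nat.iter n f (w n))) p).
    change (Nat.iter (S n) f (w n)) with (f (Nat.iter n f (w n))) in Hwn. lra.
Qed.

Fixpoint backseq {X : Type} (p0 : X) (g : nat * X -> X) (m : nat) : X :=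
  match m with 0%nat => p0 | S m' => g (m', backseq p0 g m') end.

Lemma excess_le (X : Type) (d : X -> X -> R) (Hm : is_metric d) (SA SB : X -> Prop) e :
  (forall a, SA a -> exists b, SB b /\ d a b <= e) ->
  Rbar_le (excess d (d_closure d SA) (d_closure d SB)) (Finite e).
Proof.
  pose proof Hm as [Hnn [Hz [Hsym Htri]]].
  intros HAB. unfold excess.
  destruct (Lub_Rbar_correct (fun r => exists a, d_closure d SA a /\
     Finite r = dist_pt_set d a (d_closure d SB))) as [Hub Hlub].
  apply Hlub. intros r [a [Ha Hr]]. simpl.
  unfold dist_pt_set in Hr.
  destruct (Glb_Rbar_correct (fun r0 => exists b, d_closure d SB b /\ r0 = d a b)) as [Hlb _].
  rewrite <- Hr in Hlb.
  apply Rle_plus_epsilon. intros eta Heta.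
  destruct (Ha eta Heta) as [a' [Ha' Hda]].
  destruct (HAB a' Ha') as [b [Hb Hdb]].
  assert (Hcl : d_closure d SB b).
  { intros e' He'. exists b. split; auto. rewrite (proj2 (Hz b b) eq_refl). exact He'. }
  assert (Hr2 : r <= d a b).
  { exact (Hlb (d a b) (ex_intro _ b (conj Hcl eq_refl))). }
  pose proof (Htri a a' b). lra.
Qed.

Lemma haus_lemma (X : Type) (d : X -> X -> R) (Hm : is_metric d) (z x : Z -> X)
  (Q : Z -> Prop) (h : Z -> Z) e eps :
  (forall j, d (z j) (x j) <= e) -> e < eps ->
  Rbar_lt (hausdorff d (d_closure d (fun p => exists i, Q i /\ p = z (h i)))
                       (d_closure d (fun p => exists i, Q i /\ p = x (h i)))) (Finite eps).
Proof.
  pose proof Hm as [Hnn [Hz [Hsym Htri]]].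
  intros Hd He.
  assert (H1 : Rbar_le (excess d (d_closure d (fun p => exists i, Q i /\ p = z (h i)))
                       (d_closure d (fun p => exists i, Q i /\ p = x (h i)))) (Finite e)).
  { apply excess_le; auto. intros a [i [Hi ->]]. exists (x (h i)). split; eauto. }
  assert (H2 : Rbar_le (excess d (d_closure d (fun p => exists i, Q i /\ p = x (h i)))
                       (d_closure d (fun p => exists i, Q i /\ p = z (h i)))) (Finite e)).
  { apply excess_le; auto. intros a [i [Hi ->]]. exists (z (h i)). split; eauto.
    rewrite Hsym. auto. }
  unfold hausdorff, Rbar_maxi. destruct Rbar_le_dec;
  eapply Rbar_le_lt_trans; eauto; simpl; lra.
Qed.

Theorem mainTheorem6 (X : Type) (d : X -> X -> R) (f : X -> X)
  (Hmetric : is_metric d) (Hcompact : d_compact d) (Hcont : d_continuous d f) :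
  shadowing d f -> gamma_two_sided_cofinal_orbital_shadowing d f.
Proof.
  intros Hsh eps Heps.
  destruct (Hsh (eps/2)) as [del [Hdel Hs]]; [lra|].
  exists del. split; auto. intros x Hx _.
  assert (Hshk : forall k, exists p, Kset d f x (eps/2) k p).
  { intro k. destruct (Hs (fun i => x (Z.of_nat i - Z.of_nat k)%Z)) as [p Hp].
    - intro i. replace (Z.of_nat (S i) - Z.of_nat k)%Z with ((Z.of_nat i - Z.of_nat k) + 1)%Z by lia.
      apply Hx.
    - exists p. intro i. left. apply Hp. }
  destruct (P0 X d f Hmetric Hcompact Hcont x (eps/2) Hshk) as [p0 Hp0].
  assert (Hst : forall mp : nat * X, exists q,
     Pset d f x (eps/2) (fst mp) (snd mp) -> Pset d f x (eps/2) (S (fst mp)) q /\ f q = snd mp).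
  { intros [m p]. simpl. destruct (classic (Pset d f x (eps/2) m p)) as [H|H].
    - destruct (Pstep X d f Hmetric Hcompact Hcont x (eps/2) m p H) as [q Hq].
      exists q; auto.
    - exists p; intro; contradiction. }
  destruct (ClassicalEpsilon.choice _ Hst) as [g Hg].
  assert (Hback : forall m, Pset d f x (eps/2) m (backseq p0 g m)).
  { induction m as [|m IH]; simpl; auto. exact (proj1 (Hg (m, backseq p0 g m) IH)). }
  assert (Hbackf : forall m, f (backseq p0 g (S m)) = backseq p0 g m).
  { intro m. simpl. exact (proj2 (Hg (m, backseq p0 g m) (Hback m))). }
  set (z := fun i : Z => if (0 <=? i)%Z then Nat.iter (Z.to_nat i) f p0
                         else backseq p0 g (Z.to_nat (- i))).
  assert (Hzx : forall i, d (z i) (x i) <= eps/2).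
  { intro i. unfold z. destruct (Z.leb_spec 0 i).
    - pose proof (proj1 Hp0 (Z.to_nat i)) as H1.
      replace (Z.of_nat (Z.to_nat i) - Z.of_nat 0)%Z with i in H1 by lia. exact H1.
    - pose proof (proj1 (Hback (Z.to_nat (- i))) 0%nat) as H1. simpl Nat.iter in H1.
      replace (Z.of_nat 0 - Z.of_nat (Z.to_nat (- i)))%Z with i in H1 by lia. exact H1. }
  assert (Htraj : forall i, f (z i) = z (i + 1)%Z).
  { intro i. unfold z. destruct (Z.leb_spec 0 i).
    - rewrite (proj2 (Z.leb_le 0 (i+1))) by lia.
      replace (Z.to_nat (i+1)) with (S (Z.to_nat i)) by lia. reflexivity.
    - destruct (Z.eq_dec i (-1)).
      + subst. simpl. apply (Hbackf 0%nat).
      + rewrite (proj2 (Z.leb_gt 0 (i+1))) by lia.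
        replace (Z.to_nat (- i)) with (S (Z.to_nat (- (i + 1)))) by lia. apply Hbackf. }
  exists z. split; auto. intros K. exists K. split; [lia|]. split.
  - unfold fwd_tail.
    apply (haus_lemma X d Hmetric z x (fun i => (i >= 0)%Z) (fun i => (Z.of_nat K + i)%Z) (eps/2));
      auto; lra.
  - unfold bwd_tail.
    apply (haus_lemma X d Hmetric z x (fun i => (i <= 0)%Z) (fun i => (i - Z.of_nat K)%Z) (eps/2));
      auto; lra.
Qed.
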